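(* Let $n\ge 1$, let $\chi$ be an irreducible character of $S_n$, let $1\le k\le n$ and let $A,X^1,\ldots,X^k\in M_n(\mathbb{C})$. Then $$D^k d_{\chi}(A)(X^1,\ldots ,X^k)= \sum_{\sigma \in S_k} \sum_{\alpha \in Q_{k,n}}d_{\chi}\big(A(\alpha ;X^{\sigma(1)},\ldots ,X^{\sigma(k)})\big).$$ In particular, for every $X\in M_n(\mathbb{C})$, $$D^k d_{\chi}(A)(X,\ldots ,X)= k!\sum_{\alpha \in Q_{k,n}}d_{\chi}\big(A(\alpha ;X,\ldots ,X)\big).$$
   Context: For $A=(a_{ij})\in M_n(\mathbb{C})$, $d_\chi(A)=\sum_{\sigma\in S_n}\chi(\sigma)\prod_{i=1}^n a_{i\sigma(i)}$ (the immanant). The $k$-th derivative of $d_\chi$ at $A$ in direction $(X^1,\ldots,X^k)$ is $D^k d_\chi(A)(X^1,\ldots,X^k)=\frac{\partial^k}{\partial t_1\cdots\partial t_k}\big|_{t_1=\cdots=t_k=0} d_\chi(A+t_1X^1+\cdots+t_kX^k)$. $Q_{k,n}$ is the set of strictly increasing maps $\{1,\ldots,k\}\to\{1,\ldots,n\}$. For $\alpha\in Q_{k,n}$ and $Y^1,\ldots,Y^k\in M_n(\mathbb{C})$, $A(\alpha;Y^1,\ldots,Y^k)$ is the $n\times n$ matrix obtained from $A$ by replacing, for each $j=1,\ldots,k$, the $\alpha(j)$-th column of $A$ by the $\alpha(j)$-th column of $Y^j$, all other columns being those of $A$. *)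

(* Defs.v *)
From HB Require Import structures.
From mathcomp Require Import all_boot all_order all_algebra all_fingroup.
From mathcomp Require Import mxrepresentation.
From mathcomp Require Import complex.
From mathcomp Require Import all_classical all_reals all_analysis.

Set Implicit Arguments.
Unset Strict Implicit.
Unset Printing Implicit Defensive.

Import Order.TTheory GRing.Theory Num.Theory.
Import numFieldNormedType.Exports.
Local Open Scope ring_scope.

Definition immanant (K : comNzRingType) (n : nat) (chi : 'S_n -> K)
    (A : 'M[K]_n) : K :=
  \sum_(s : 'S_n) chi s * \prod_(i < n) A i (s i).

Definition repr_char (F : fieldType) (n d : nat)
    (rG : mx_representation F [set: 'S_n]%G d) : 'S_n -> F :=
  fun s => \tr (rG s).

Definition Qkn (k n : nat) : pred {ffun 'I_k -> 'I_n} :=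
  [pred a : {ffun 'I_k -> 'I_n} |
     [forall i : 'I_k, forall j : 'I_k, (i < j)%N ==> (a i < a j)%N]].

(** A(alpha; Y^1, ..., Y^k): column alpha(l) of A replaced by column alpha(l)
    of Y^l, other columns unchanged. *)
Definition repl_cols (K : Type) (k n : nat) (A : 'M[K]_n)
    (a : {ffun 'I_k -> 'I_n}) (Y : 'I_k -> 'M[K]_n) : 'M[K]_n :=
  \matrix_(i < n, j < n)
    match [pick l : 'I_k | a l == j] with
    | Some l => Y l i j
    | None => A i j
    end.

Definition upd (C : Type) (k : nat) (t : 'I_k -> C) (j : 'I_k) (s : C) :
    'I_k -> C := fun i => if i == j then s else t i.

Definition partial (C : numFieldType) (k : nat) (j : 'I_k)
    (g : ('I_k -> C) -> C) : ('I_k -> C) -> C :=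
  fun t => derive1 (fun s : C => g (upd t j s)) (t j).

Definition mixed_partial (C : numFieldType) (k : nat)
    (g : ('I_k -> C) -> C) : ('I_k -> C) -> C :=
  foldr (fun j h => partial j h) g (enum 'I_k).

Definition Dk (C : numFieldType) (n k : nat) (f : 'M[C]_n -> C)
    (A : 'M[C]_n) (X : 'I_k -> 'M[C]_n) : C :=
  mixed_partial (fun t : 'I_k -> C => f (A + \sum_(j < k) t j *: X j))
    (fun _ => 0).

(* Main.v *)
Require Import Defs.
From HB Require Import structures.
From mathcomp Require Import all_boot all_order all_algebra all_fingroup.
From mathcomp Require Import mxrepresentation.
From mathcomp Require Import complex.
From mathcomp Require Import all_classical all_reals all_analysis.

Import Order.TTheory GRing.Theory Num.Theory.
Import numFieldNormedType.Exports.
Local Open Scope ring_scope.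

Set Implicit Arguments.
Unset Strict Implicit.
Unset Printing Implicit Defensive.


Section Ana.
Variable C : numFieldType.
Variable k : nat.

Definition mono (m : 'I_k -> nat) (t : 'I_k -> C) : C := \prod_(j < k) t j ^+ m j.

Definition PF (I : finType) (c : I -> C) (e : I -> 'I_k -> nat) :
  ('I_k -> C) -> C := fun t => \sum_(i : I) c i * mono (e i) t.

Lemma is_derive_bigseq (I : Type) (s : seq I) (h : I -> C -> C) (dh : I -> C) x :
  (forall i, is_derive x (1:C) (h i) (dh i)) ->
  is_derive x (1:C) (fun y => \sum_(i <- s) h i y) (\sum_(i <- s) dh i).
Proof.
move=> H; elim: s => [|a s IH].
  rewrite big_nil.
  have -> : (fun y : C => \sum_(i <- [::]) h i y) = cst 0.
    by apply/funext => y; rewrite big_nil.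
  exact: is_derive_cst.
have -> : (fun y : C => \sum_(i <- a :: s) h i y) =
  (h a + (fun y => \sum_(i <- s) h i y)).
  by apply/funext => y; rewrite big_cons.
rewrite big_cons; exact: is_deriveD.
Qed.

Lemma is_derive_monoterm (b : C) (m : nat) x :
  is_derive x (1:C) (fun s : C => b * s ^+ m) (b * (m%:R * x ^+ m.-1)).
Proof.
apply: DeriveDef.
  have -> : (fun s : C => b * s ^+ m) = b \*o (@GRing.exp C ^~ m) by [].
  apply: derivableM; first exact: derivable_cst.
  exact: exprn_derivable.
have -> : (fun s : C => b * s ^+ m) = b \*o (@GRing.exp C ^~ m) by [].
rewrite deriveMl; last exact: exprn_derivable.
by rewrite exp_derive -scalerA scaler1.
Qed.

Lemma upd_mono (m : 'I_k -> nat) t j s :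
  mono m (upd t j s) = s ^+ m j * \prod_(l < k | l != j) t l ^+ m l.
Proof.
rewrite /mono (bigD1 j) //= /upd eqxx; congr (_ * _).
by apply: eq_bigr => l /negbTE ->.
Qed.

Lemma partial_PF (I : finType) (c : I -> C) e j :
  partial j (PF c e) =
  PF (fun i => c i * (e i j)%:R) (fun i => upd (e i) j (e i j).-1).
Proof.
apply/funext => t; rewrite /partial /PF.
have -> : (fun s : C => \sum_i c i * mono (e i) (upd t j s)) =
  (fun s => \sum_(i <- index_enum I)
     (fun i s => (c i * \prod_(l < k | l != j) t l ^+ e i l) * s ^+ e i j) i s).
  apply/funext => s; apply: eq_bigr => i _.
  by rewrite upd_mono [s ^+ _ * _]mulrC mulrA.
rewrite derive1E (@derive_val _ _ _ _ _ _ _ (@is_derive_bigseq _ _ _ _ _ (fun i => is_derive_monoterm _ _ _))).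
apply: eq_bigr => i _.
rewrite /mono [in RHS](bigD1 j) //= /upd eqxx.
have -> : \prod_(l < k | l != j) t l ^+ (if l == j then (e i j).-1 else e i l)
  = \prod_(l < k | l != j) t l ^+ e i l.
  by apply: eq_bigr => l /negbTE ->.
rewrite -!mulrA; congr (_ * _).
by rewrite mulrC -!mulrA; congr (_ * _); rewrite mulrC.
Qed.

End Ana.


Section Ana2.
Variable C : numFieldType.
Variable k : nat.

Lemma foldr_partial_PF (I : finType) (c : I -> C) (e : I -> 'I_k -> nat)
   (l : seq 'I_k) : uniq l ->
  foldr (fun j h => partial j h) (PF c e) l =
  PF (fun i => c i * \prod_(j <- l) (e i j)%:R)
     (fun i j' => if j' \in l then (e i j').-1 else e i j').
Proof.
elim: l => [|a l IH] /=.
  by move=> _; congr PF; apply/funext => i; rewrite big_nil mulr1.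
move=> /andP [anl ul]; rewrite IH // partial_PF; congr PF.
  apply/funext => i; rewrite (negbTE anl) big_cons.
  by rewrite -mulrA [X in _ * X]mulrC.
apply/funext => i; apply/funext => j'; rewrite /upd in_cons (negbTE anl).
by case: eqP => [->|].
Qed.

Lemma prod_nat_zero (m : 'I_k -> nat) :
  (\prod_(j < k) (m j)%:R) * \prod_(j < k) (0:C) ^+ (m j).-1 =
  if [forall j, m j == 1%N] then 1 else 0.
Proof.
case: ifP => [/forallP H|/negbT].
  rewrite !big1 ?mulr1 // => j _; by rewrite (eqP (H j)).
rewrite negb_forall => /existsP [j Hj].
case E: (m j) => [|p].
  by rewrite (bigD1 j) //= E mul0r mul0r.
have : p <> 0%N by move=> p0; rewrite E p0 in Hj.
rewrite [X in _ * X](bigD1 j) //= E /= => p0.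
by rewrite expr0n (negbTE (introN eqP p0)) mul0r mulr0.
Qed.

Lemma mixed_PF_0 (I : finType) (c : I -> C) (e : I -> 'I_k -> nat) :
  mixed_partial (PF c e) (fun _ => 0) =
  \sum_i c i * (if [forall j, e i j == 1%N] then 1 else 0).
Proof.
rewrite /mixed_partial foldr_partial_PF ?enum_uniq // /PF.
apply: eq_bigr => i _.
rewrite -prod_nat_zero /mono -mulrA; congr (_ * _).
rewrite big_enum /=; congr (_ * _).
by apply: eq_bigr => j _; rewrite mem_enum.
Qed.

End Ana2.


Lemma big_option_sum (R : nmodType) (T : finType) (F : option T -> R) :
  \sum_(o : option T) F o = F None + \sum_(j : T) F (Some j).
Proof.
rewrite [LHS](bigD1 None) //=; congr (_ + _).
rewrite (reindex_omap Some id) /=; last by case.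
by apply: eq_bigl => j; rewrite eqxx.
Qed.

Section Exp.
Variable C : numFieldType.
Variables n k : nat.
Variable A : 'M[C]_n.
Variable X : 'I_k -> 'M[C]_n.

Definition Nval (r c : 'I_n) (o : option 'I_k) : C :=
  match o with Some j => X j r c | None => A r c end.

Definition Nf (f : {ffun 'I_n -> option 'I_k}) : 'M[C]_n :=
  \matrix_(i, c) Nval i c (f c).

Definition cnt (f : {ffun 'I_n -> option 'I_k}) (j : 'I_k) : nat :=
  #|[set c | f c == Some j]|.

Definition wt (t : 'I_k -> C) (o : option 'I_k) : C :=
  match o with Some j => t j | None => 1 end.

Lemma prod_wt (f : {ffun 'I_n -> option 'I_k}) t : \prod_c wt t (f c) = mono (cnt f) t.
Proof.
transitivity (\prod_c \prod_j (if f c == Some j then t j else 1)).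
  apply: eq_bigr => c _; case: (f c) => [j0|] /=.
    rewrite (bigD1 j0) //= eqxx big1 ?mulr1 // => j jn.
    by case: eqP => // [[E]]; rewrite E eqxx in jn.
  by rewrite big1.
rewrite exchange_big /mono; apply: eq_bigr => j _.
rewrite /cnt -prodr_const [RHS]big_mkcond; apply: eq_bigr => c _.
by rewrite inE.
Qed.

Lemma expand_row (s : 'S_n) (t : 'I_k -> C) :
  \prod_i (A + \sum_j t j *: X j) i (s i) =
  \sum_(f : {ffun 'I_n -> option 'I_k}) (\prod_i Nf f i (s i)) * mono (cnt f) t.
Proof.
have reidx : forall G : 'I_n -> 'I_n -> C,
    \prod_i G i (s i) = \prod_c G ((s^-1)%g c) c.
  move=> G; rewrite [RHS](reindex_inj (@perm_inj _ s)).
  by apply: eq_bigr => i _; rewrite permK.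
rewrite reidx.
have -> : \prod_c (A + \sum_j t j *: X j) ((s^-1)%g c) c =
   \prod_c \sum_(o : option 'I_k) wt t o * Nval ((s^-1)%g c) c o.
  apply: eq_bigr => c _; rewrite big_option_sum /= mul1r !mxE summxE.
  by congr (_ + _); apply: eq_bigr => j _; rewrite mxE.
rewrite bigA_distr_bigA /=; apply: eq_bigr => f _.
rewrite big_split /= prod_wt mulrC reidx; congr (_ * _).
by apply: eq_bigr => c _; rewrite mxE.
Qed.

Lemma expand (chi : 'S_n -> C) (t : 'I_k -> C) :
  immanant chi (A + \sum_j t j *: X j) =
  PF (fun p : 'S_n * {ffun 'I_n -> option 'I_k} =>
        chi p.1 * \prod_i Nf p.2 i (p.1 i)) (fun p => cnt p.2) t.
Proof.
rewrite /immanant /PF.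
rewrite -(pair_bigA _ (fun s (f : {ffun 'I_n -> option 'I_k}) =>
   chi s * \prod_i Nf f i (s i) * mono (cnt f) t)) /=; apply: eq_bigr => s _.
by rewrite expand_row mulr_sumr; apply: eq_bigr => f _; rewrite mulrA.
Qed.

Definition good (f : {ffun 'I_n -> option 'I_k}) := [forall j, cnt f j == 1%N].

Lemma Dk_expand (chi : 'S_n -> C) :
  Dk (immanant chi) A X = \sum_(f | good f) immanant chi (Nf f).
Proof.
rewrite /Dk.
have -> : (fun t : 'I_k -> C => immanant chi (A + \sum_(j < k) t j *: X j)) =
  PF (fun p : 'S_n * {ffun 'I_n -> option 'I_k} =>
        chi p.1 * \prod_i Nf p.2 i (p.1 i)) (fun p => cnt p.2).
  by apply/funext => t; rewrite expand.
rewrite mixed_PF_0.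
rewrite -(pair_bigA _ (fun s (f : {ffun 'I_n -> option 'I_k}) =>
   chi s * \prod_i Nf f i (s i) * (if [forall j, cnt f j == 1%N] then 1 else 0)))
   /= exchange_big /= [RHS]big_mkcond /=.
apply: eq_bigr => f _; rewrite /good; case: ifP => _.
  by rewrite /immanant; apply: eq_bigr => s _; rewrite mulr1.
by rewrite big1 // => s _; rewrite mulr0.
Qed.

End Exp.

Local Close Scope ring_scope.


Section Comb.
Variables n k : nat.

Definition ltord (m : nat) : rel 'I_m := fun x y => (x < y)%N.

Lemma ltord_trans m : transitive (@ltord m).
Proof. by move=> y x z; rewrite /ltord; apply: ltn_trans. Qed.

Lemma ltord_irr m : irreflexive (@ltord m).
Proof. by move=> x; rewrite /ltord ltnn. Qed.

Lemma enum_sorted m : sorted (@ltord m) (enum 'I_m).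
Proof. by have := iota_ltn_sorted 0 m; rewrite -val_enum_ord sorted_map. Qed.

Definition Fm (s : 'S_k) (a : {ffun 'I_k -> 'I_n}) : {ffun 'I_n -> option 'I_k} :=
  [ffun c => omap s [pick l | a l == c]].

Lemma map_enum_ffun m (T : eqType) (f g : {ffun 'I_m -> T}) :
  map f (enum 'I_m) = map g (enum 'I_m) -> f = g.
Proof.
rewrite -!codomE !codom_ffun => E.
by apply: (can_inj fgraphK); apply: val_inj.
Qed.

Lemma Qkn_inj (a : {ffun 'I_k -> 'I_n}) : Qkn a -> injective a.
Proof.
move=> /forallP H i j E; case: (ltngtP i j) => [ij|ji|/val_inj //].
  by have := implyP (forallP (H i) j) ij; rewrite E ltnn.
by have := implyP (forallP (H j) i) ji; rewrite E ltnn.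
Qed.

Lemma pick_a (a : {ffun 'I_k -> 'I_n}) (Ha : injective a) l :
  [pick l' | a l' == a l] = Some l.
Proof.
case: pickP => [l' /eqP /Ha -> //|/(_ l)]; by rewrite eqxx.
Qed.

Lemma Qkn_sorted (a : {ffun 'I_k -> 'I_n}) : Qkn a -> sorted (@ltord n) (map a (enum 'I_k)).
Proof.
move=> /forallP H; apply: (homo_sorted (e := @ltord k)); last exact: enum_sorted.
by move=> i j ij; apply: (implyP (forallP (H i) j)).
Qed.

Lemma mem_map_a s (a : {ffun 'I_k -> 'I_n}) c : (c \in map a (enum 'I_k)) = (Fm s a c != None).
Proof.
rewrite ffunE; case: pickP => [l /eqP <-|H] /=.
  by apply: map_f; rewrite mem_enum.
by apply/mapP => [[l _ E]]; have := H l; rewrite E eqxx.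
Qed.

Lemma Fm_uniq s (a : {ffun 'I_k -> 'I_n}) s' (a' : {ffun 'I_k -> 'I_n}) : Qkn a -> Qkn a' -> Fm s a = Fm s' a' -> a = a' /\ s = s'.
Proof.
move=> Ha Ha' EF.
have Em : map a (enum 'I_k) = map a' (enum 'I_k).
  apply: (irr_sorted_eq (@ltord_trans n) (@ltord_irr n));
    [exact: Qkn_sorted|exact: Qkn_sorted|].
  by move=> c; rewrite (mem_map_a s) (mem_map_a s') EF.
have Eaa : a = a'.
  exact: map_enum_ffun.
split => //; apply/permP => l.
have Hi : injective a by exact: Qkn_inj.
have := congr1 (fun f : {ffun 'I_n -> option 'I_k} => f (a l)) EF.
rewrite /= !ffunE pick_a // Eaa pick_a; first by case.
by rewrite -Eaa.
Qed.

End Comb.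


Section Comb2.
Variables n k : nat.

Definition goodf (f : {ffun 'I_n -> option 'I_k}) :=
  [forall j, #|[set c | f c == Some j]| == 1%N].

Lemma Fm_exists (d : 'I_n) (f : {ffun 'I_n -> option 'I_k}) :
  goodf f -> exists s a, Qkn a /\ Fm s a = f.
Proof.
move=> /forallP G.
pose beta j := odflt d [pick c | f c == Some j].
have Hb : forall j c, (f c == Some j) = (c == beta j).
  move=> j c; have /cards1P [c0 E] := G j.
  have Ec : forall c', (f c' == Some j) = (c' == c0).
    by move=> c'; rewrite -finset.in_set1 -E inE.
  rewrite /beta; case: pickP => [c1|/(_ c0)]; last by rewrite Ec eqxx.
  by rewrite Ec => /eqP ->; rewrite Ec.
have Fb : forall j, f (beta j) = Some j by move=> j; apply/eqP; rewrite Hb.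
have binj : injective beta.
  by move=> j j' E; have := Fb j; rewrite E Fb => [[]].
pose S := [set c | f c != None].
have ES : S = [set beta j | j in [set: 'I_k]].
  apply/setP => c; rewrite inE; apply/idP/imsetP.
    case E: (f c) => [j|] // _; exists j; first by rewrite inE.
    by apply/eqP; rewrite -Hb E.
  by move=> [j _ ->]; rewrite Fb.
have cS : #|S| = k by rewrite ES card_imset // cardsT card_ord.
pose sq := [seq c <- enum 'I_n | c \in S].
have usq : uniq sq by rewrite filter_uniq // enum_uniq.
have msq : forall c, (c \in sq) = (c \in S) by move=> c; rewrite mem_filter mem_enum andbT.
have szq : size sq = k.
  rewrite -cS; move/card_uniqP: usq => <-; apply: eq_card => c; exact: msq.
have ssq : sorted (@ltord n) sq by apply: sorted_filter; [exact: ltord_trans|exact: enum_sorted].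
pose a := [ffun l : 'I_k => nth d sq l].
have Qa : Qkn a.
  apply/forallP => i; apply/forallP => j; apply/implyP => ij; rewrite /a !ffunE.
  by apply: (sorted_ltn_nth (@ltord_trans n)) => //; rewrite inE szq.
have ainj := Qkn_inj Qa.
have fa : forall l, f (a l) != None.
  move=> l; have : a l \in S by rewrite -msq /a ffunE mem_nth // szq.
  by rewrite inE.
pose s' l := odflt l (f (a l)).
have fs' : forall l, f (a l) = Some (s' l).
  by move=> l; rewrite /s'; move: (fa l); case: (f (a l)).
have s'inj : injective s'.
  move=> l l' E; apply: ainj.
  have /eqP := fs' l; rewrite Hb => /eqP ->.
  by have /eqP := fs' l'; rewrite Hb E => /eqP ->.
exists (perm s'inj), a; split => //.
apply/ffunP => c; rewrite ffunE; case: pickP => [l /eqP <-|H] /=.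
  by rewrite permE fs'.
case E: (f c) => [j|] //.
have cS' : c \in sq by rewrite msq inE E.
have lt : index c sq < k by rewrite -szq index_mem.
by have := H (Ordinal lt); rewrite /a ffunE /= nth_index // eqxx.
Qed.

End Comb2.

Local Open Scope ring_scope.


Section Comb3.
Variables n k : nat.

Lemma good_Fm (s : 'S_k) (a : {ffun 'I_k -> 'I_n}) : Qkn a -> goodf (Fm s a).
Proof.
move=> Qa; have ai := Qkn_inj Qa.
apply/forallP => j; apply/cards1P; exists (a ((s^-1)%g j)).
apply/setP => c; rewrite !inE ffunE.
case: pickP => [l /eqP <-|H] /=.
  by rewrite (inj_eq ai) -(inj_eq (@perm_inj _ s)) permKV.
by rewrite [c == _]eq_sym H.
Qed.

Lemma sum_Fm (V : nmodType) (d : 'I_n) (G : {ffun 'I_n -> option 'I_k} -> V) :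
  \sum_(s : 'S_k) \sum_(a | Qkn a) G (Fm s a) = \sum_(f | goodf f) G f.
Proof.
rewrite pair_big /=.
rewrite (partition_big (fun p : 'S_k * {ffun 'I_k -> 'I_n} => Fm p.1 p.2) (@goodf n k)) /=;
  last by move=> [s a] /= Qa; exact: good_Fm.
apply: eq_bigr => f gf.
have [s0 [a0 [Qa0 E0]]] := Fm_exists d gf.
rewrite (big_pred1 (s0, a0)) /=; first by rewrite E0.
move=> [s a] /=; apply/idP/idP.
  move=> /andP [Qa /eqP E]; rewrite -E0 in E.
  by have [-> ->] := Fm_uniq Qa Qa0 E.
by move=> /eqP [-> ->]; rewrite Qa0 E0 eqxx.
Qed.

End Comb3.

Unset Implicit Arguments.


Lemma repl_F (C : numFieldType) n k (A : 'M[C]_n) (X : 'I_k -> 'M[C]_n)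
  (s : 'S_k) (a : {ffun 'I_k -> 'I_n}) :
  repl_cols A a (fun l => X (s l)) = Nf A X (Fm s a).
Proof.
apply/matrixP => i c; rewrite !mxE ffunE.
by case: pickP.
Qed.

Lemma part1 (C : numFieldType) n k (chi : 'S_n -> C) (A : 'M[C]_n)
  (X : 'I_k -> 'M[C]_n) (d : 'I_n) :
  Dk (immanant chi) A X =
    \sum_(s : 'S_k) \sum_(a : {ffun 'I_k -> 'I_n} | Qkn a)
       immanant chi (repl_cols A a (fun l => X (s l))).
Proof.
rewrite Dk_expand -(sum_Fm d (fun f => immanant chi (Nf A X f))).
apply: eq_bigr => s _; apply: eq_bigr => a _; by rewrite repl_F.
Qed.

Theorem mainTheorem2 (R : realType) (n k d : nat)
  (rG : mx_representation R[i] [set: 'S_n]%G d)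
  (A : 'M[R[i]]_n) (X : 'I_k -> 'M[R[i]]_n) :
  (1 <= n)%N -> mx_irreducible rG -> (1 <= k)%N -> (k <= n)%N ->
  Dk (immanant (repr_char rG)) A X =
    \sum_(s : 'S_k) \sum_(a : {ffun 'I_k -> 'I_n} | Qkn a)
       immanant (repr_char rG) (repl_cols A a (fun l => X (s l)))
  /\ (forall Y : 'M[R[i]]_n,
       Dk (immanant (repr_char rG)) A (fun _ : 'I_k => Y) =
         k`!%:R * \sum_(a : {ffun 'I_k -> 'I_n} | Qkn a)
            immanant (repr_char rG) (repl_cols A a (fun _ => Y))).
Proof.
move=> n1 _ _ _.
have d0 : 'I_n := Ordinal n1.
split; first exact: (@part1 _ _ _ _ _ _ d0).
move=> Y; rewrite (@part1 _ _ _ _ _ _ d0) sumr_const card_Sn.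
by rewrite mulr_natl.
Qed.
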